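(* Let $a\geqslant 1$ and let $\Omega$ be a subset of $\mathbb{Z}_{2a}$ such that for every $g\in\Omega$ one has $|g|>2$ and $-g\in\Omega$. Let $\Psi$ be an abelian group of order $2^\alpha$ with $\alpha\geqslant 2$. Then there exists a set $\mathcal{T}$ of $|\Omega|/2$ zero-sum arrays of size $2\times 2^\alpha$ with entries in $\mathbb{Z}_{2a}\oplus\Psi$ such that the list of all entries of the arrays of $\mathcal{T}$ (counted with multiplicity) is exactly $\{(x,y): x\in\Omega,\ y\in\Psi\}$, each element appearing once.
   Context: $|g|$ denotes the order of $g$. An array with entries in an abelian group is zero-sum if the sum of the entries in each row and in each column equals $0$. *)

(* Defs.v *)
From HB Require Import structures.
From mathcomp Require Import all_boot all_order all_algebra all_fingroup.
Set Implicit Arguments. Unset Strict Implicit. Unset Printing Implicit Defensive.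
Import GRing.Theory.
Local Open Scope ring_scope.

Definition zero_sum_array (G : zmodType) (m n : nat) (A : 'M[G]_(m, n)) : Prop :=
  (forall i : 'I_m, \sum_(j < n) A i j = 0) /\
  (forall j : 'I_n, \sum_(i < m) A i j = 0).

Definition mx_entries (T : Type) (m n : nat) (A : 'M[T]_(m, n)) : seq T :=
  [seq A i j | i <- enum 'I_m, j <- enum 'I_n].

(* Main.v *)
Require Import Defs.
From HB Require Import structures.
From mathcomp Require Import all_boot all_order all_algebra all_fingroup.
From mathcomp Require Import pgroup cyclic.
Set Implicit Arguments. Unset Strict Implicit. Unset Printing Implicit Defensive.
Import GRing.Theory.
Local Open Scope ring_scope.

Lemma inv_split (T : finType) (S : {set T}) (s : T -> T) :
  involutive s -> (forall x, x \in S -> s x \in S /\ s x != x) ->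
  exists A : {set T}, A \subset S /\ S :\: A = s @: A.
Proof.
move=> sK hS.
exists [set x in S | (enum_rank x < enum_rank (s x))%N]; split.
  by apply/subsetP => x; rewrite inE => /andP[].
apply/setP => x; rewrite !inE.
have -> : (x \in s @: [set x in S | (enum_rank x < enum_rank (s x))%N]) =
          (s x \in [set x in S | (enum_rank x < enum_rank (s x))%N]).
  apply/imsetP/idP => [[y Hy ->]|H]; first by rewrite sK.
  by exists (s x); rewrite ?sK.
rewrite inE sK.
case Sx: (x \in S); last first.
  rewrite andbF /=; case Ssx: (s x \in S) => //.
  by have := (hS _ Ssx).1; rewrite sK Sx.
have [Ssx nsx] := hS _ Sx; rewrite Ssx /= andbT.
have ne : enum_rank x != enum_rank (s x).
  apply: contra nsx => /eqP H; apply/eqP; exact: (enum_rank_inj (esym H)).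
by rewrite ltnNge leq_eqVlt negb_or eq_sym ne /= negbK.
Qed.

Lemma psi_split (Psi : finZmodType) : (4 %| #|Psi|)%N ->
  exists A : {set Psi}, (#|A| * 2)%N = #|Psi| /\
    \sum_(y in A) y = \sum_(y in ~: A) y.
Proof.
move=> H4.
have H2 : (2 %| #|[set: Psi]%G|)%N.
  by rewrite cardsT; apply: dvdn_trans H4.
have [c _ oc] := Cauchy (isT : prime 2) H2.
have cc : c + c = 0.
  have := expg_order c; rewrite oc. by [].
have c0 : c != 0.
  by apply/eqP => c0; move: oc; rewrite c0 order1.
have i1 : involutive (fun y => y + c) by move=> y /=; rewrite -addrA cc addr0.
have i2 : forall y, y \in [set: Psi] -> y + c \in [set: Psi] /\ y + c != y.
  by move=> y _; split; rewrite ?in_setT // -subr_eq0 addrAC subrr add0r.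
have [A [_ EA]] := inv_split i1 i2.
have EA2 : ~: A = [set y + c | y in A] by rewrite -EA setTD.
have cA : (#|A| * 2)%N = #|Psi|.
  rewrite -(cardsC A) EA2 card_imset ?muln2 ?addnn //.
  by move=> x y /addIr.
exists A; split => //.
rewrite EA2 big_imset /=; last by move=> x y _ _ /addIr.
rewrite big_split /= sumr_const.
have [k ->] : exists k, #|A| = (k * 2)%N.
  exists (#|A| %/ 2)%N; apply/esym/eqP; rewrite -dvdn_eq.
  by rewrite -(@dvdn_pmul2r 2) // cA.
by rewrite mulnC mulrnA mulr2n cc mul0rn addr0.
Qed.
Lemma pair_sum (U V : zmodType) (I : finType) (P : pred I) (f : I -> U) (g : I -> V) :
  \sum_(i | P i) ((f i, g i) : U * V) = (\sum_(i | P i) f i, \sum_(i | P i) g i).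
Proof.
by apply: (big_rec3 (fun x y z => x = (y, z))) => // i x y z _ ->.
Qed.

Definition Fm (Z : zmodType) (Psi : finZmodType) (A : {set Psi}) (g : Z) (y : Psi)
  : (Z * Psi)%type := if y \in A then (g, y) else (- g, - y).

Definition Mm (Z : zmodType) (Psi : finZmodType) (A : {set Psi}) n (h : 'I_n -> Psi)
  (g : Z) : 'M[(Z * Psi)%type]_(2, n) :=
  \matrix_(i, j) (if i == ord0 then Fm A g (h j) else - Fm A g (h j)).

Lemma Mm_zero (Z : zmodType) (Psi : finZmodType) (A : {set Psi}) n (h : 'I_n -> Psi) (g : Z) :
  bijective h -> (#|A| * 2)%N = #|Psi| -> \sum_(y in A) y = \sum_(y in ~: A) y ->
  zero_sum_array (Mm A h g).
Proof.
move=> hb cA sA.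
have S0 : \sum_(j < n) Fm A g (h j) = 0.
  rewrite -(reindex h (P := xpredT) (F := Fm A g)); last by apply: onW_bij.
  have -> : \sum_y Fm A g y = \sum_(y in A) (g, y) + \sum_(y in ~: A) (- g, - y).
    rewrite (bigID [in A]) /=; congr (_ + _); apply: eq_big.
    - by move=> y.
    - by move=> y yA; rewrite /Fm yA.
    - by move=> y; rewrite inE.
    - by move=> y yA; rewrite /Fm (negbTE yA).
  rewrite !pair_sum !sumrN -sA !sumr_const.
  have -> : #|~: A| = #|A|.
    have := cardsC A; rewrite -cA muln2 -addnn => /eqP; rewrite eqn_add2l => /eqP.
    by move=> <-.
  by rewrite -[(_,_) + _]/(_ + _, _ + _) !subrr.
split.
  move=> i; rewrite (eq_bigr (fun j => if i == ord0 then Fm A g (h j) else - Fm A g (h j))); last first.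
    by move=> j _; rewrite mxE.
  case: (i == ord0); first exact: S0.
  by rewrite sumrN S0 oppr0.
move=> j; rewrite big_ord_recl big_ord1 !mxE /=.
by rewrite subrr.
Qed.

Lemma Mm_size (Z : zmodType) (Psi : finZmodType) (A : {set Psi}) n (h : 'I_n -> Psi) (g : Z) :
  size (mx_entries (Mm A h g)) = (2 * n)%N.
Proof. by rewrite /mx_entries size_allpairs !size_enum_ord. Qed.

Lemma oppE (U V : zmodType) (x : U) (y : V) : - ((x, y) : U * V) = (- x, - y).
Proof. by []. Qed.

Lemma Mm_mem (Z : zmodType) (Psi : finZmodType) (A : {set Psi}) n (h : 'I_n -> Psi) (g : Z) z :
  bijective h -> (z \in mx_entries (Mm A h g)) = (z.1 == g) || (z.1 == - g).
Proof.
move=> [h' hK h'K].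
apply/allpairsP/idP.
  move=> [[i j] /= [_ _ ->]]; rewrite mxE /Fm.
  by case: ifP => _; case: ifP => _; rewrite ?oppE /= ?opprK /=; apply/orP; (left + right); apply/eqP.
move: z => [x y] /= /orP[] /eqP ->.
  case yA: (y \in A).
    exists (ord0, h' y); split; rewrite ?mem_enum //= mxE /= /Fm h'K yA ?oppE ?opprK //.
  exists (ord_max, h' y); split; rewrite ?mem_enum //= mxE /= /Fm h'K yA ?oppE ?opprK //.
case yA: (- y \in A).
  exists (ord_max, h' (- y)); split; rewrite ?mem_enum //= mxE /= /Fm h'K yA ?oppE ?opprK //.
exists (ord0, h' (- y)); split; rewrite ?mem_enum //= mxE /= /Fm h'K yA ?oppE ?opprK //.
Qed.

Lemma exists_bij (T : finType) n : #|T| = n -> exists h : 'I_n -> T, bijective h.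
Proof. move=> <-; exists enum_val; exact: (Bijective enum_valK enum_rankK). Qed.

Lemma ne_opp a (g : 'Z_(2 * a)) : (2 < #[g]%g)%N -> - g != g.
Proof.
move=> H; apply/eqP => E; move: H; rewrite ltnNge => /negP; apply.
apply: order_inf.
have : (g + g = 0)%R by rewrite -{1}E addNr.
by move=> gg; apply/eqP; rewrite expgS expg1; exact: gg.
Qed.

Lemma size_flat (Z : zmodType) (Psi : finZmodType) (A : {set Psi}) n (h : 'I_n -> Psi)
  (r : seq Z) :
  size (flatten [seq mx_entries M | M <- [seq Mm A h g | g <- r]]) = (size r * (2 * n))%N.
Proof. by elim: r => //= g r IH; rewrite size_cat IH Mm_size mulSn. Qed.

Close Scope ring_scope.

Theorem lemma4p6 (a : nat) (Omega : {set 'Z_(2 * a)})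
  (Psi : finZmodType) (alpha : nat) :
  (1 <= a)%N ->
  (forall g, g \in Omega -> (2 < #[g]%g)%N /\ (- g)%R \in Omega) ->
  #|Psi| = (2 ^ alpha)%N ->
  (2 <= alpha)%N ->
  exists T : seq 'M[('Z_(2 * a) * Psi)%type]_(2, 2 ^ alpha),
    size T = (#|Omega| %/ 2)%N /\
    (forall A, A \in T -> zero_sum_array A) /\
    perm_eq (flatten [seq mx_entries A | A <- T]) (enum (setX Omega [set: Psi])).
Proof.
move=> a1 hO hPsi ha.
have H4 : (4 %| #|Psi|)%N by rewrite hPsi (dvdn_exp2l 2 ha).
have [A [cA sA]] := psi_split H4.
have [h hb] := exists_bij hPsi.
have i1 : involutive (fun g : 'Z_(2 * a) => (- g)%R) by move=> g; rewrite opprK.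
have i2 : forall g, g \in Omega -> (- g)%R \in Omega /\ (- g)%R != g.
  by move=> g Hg; have [o m] := hO g Hg; split => //; apply: ne_opp.
have [R [RO ER]] := inv_split i1 i2.
have cO : #|Omega| = (#|R| * 2)%N.
  rewrite -(cardsID R Omega) ER card_imset; last exact: oppr_inj.
  by rewrite (setIidPr RO) muln2 addnn.
exists [seq Mm A h g | g <- enum R].
split; first by rewrite size_map -cardE cO mulnK.
split; first by move=> M /mapP [g _ ->]; exact: Mm_zero.
set L := flatten _.
have sub : {subset enum (setX Omega [set: Psi]) <= L}.
  move=> [x y]; rewrite mem_enum in_setX in_setT andbT => xO.
  apply/flattenP.
  case xR: (x \in R).
    exists (mx_entries (Mm A h x)); first by apply: map_f; apply: map_f; rewrite mem_enum.
    by rewrite Mm_mem //= eqxx.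
  have : x \in Omega :\: R by rewrite inE xR xO.
  rewrite ER => /imsetP [g gR ->].
  exists (mx_entries (Mm A h g)); first by apply: map_f; apply: map_f; rewrite mem_enum.
  by rewrite Mm_mem //= eqxx orbT.
have sz : (size L <= size (enum (setX Omega [set: Psi])))%N.
  have e1 : size (enum R) = #|R| by rewrite cardE.
  have e2 : size (enum (setX Omega [set: Psi])) = #|setX Omega [set: Psi]| by rewrite cardE.
  by rewrite /L size_flat e1 e2 cardsX cardsT cO hPsi mulnA.
have uL := leq_size_uniq (enum_uniq _) sub sz.
apply: uniq_perm => //; first exact: enum_uniq.
move=> z; apply/idP/idP; last exact: sub.
move=> /flattenP [s /mapP [M /mapP [g gR ->] ->]].
rewrite mem_enum in gR; rewrite Mm_mem //.
move: z => [x y] /= /orP [] /eqP ->; rewrite mem_enum in_setX in_setT andbT.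
  exact: (subsetP RO).
exact: (hO g (subsetP RO g gR)).2.
Qed.
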